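(* Let $G$ be a triangle-free $2$-degenerate graph on $n\ge1$ vertices. Then $\sqrt[n]{\tilde b(G)}\le\Gamma_2$, where $\Gamma_2\approx1.2207$ is the unique root in $[1,2]$ of $x^4-x-1=0$.
   Context: A graph is $2$-degenerate if every induced subgraph has a vertex of degree at most $2$. $\mathrm{Ind}(G)$ is the independence complex of $G$ (including the empty face), and $\tilde b(G)=\sum_{i\ge-1}\dim_{\mathbb{K}}\widetilde H_i(\mathrm{Ind}(G);\mathbb{K})$ for a fixed field $\mathbb{K}$. *)

(* Defs.v *)
From HB Require Import structures.
From mathcomp Require Import all_boot all_order all_algebra.
Set Implicit Arguments. Unset Strict Implicit. Unset Printing Implicit Defensive.
Import Order.TTheory GRing.Theory Num.Theory.

Section Graphs.
Variable T : finType.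
Variable e : rel T.

Definition simple_graph : Prop := symmetric e /\ irreflexive e.

Definition triangle_free : Prop :=
  forall x y z : T, ~ [&& e x y, e y z & e x z].

Definition two_degenerate : Prop :=
  forall A : {set T}, A != set0 ->
    exists2 v, v \in A & #|[set u in A | e v u]| <= 2.

Definition independent (S : {set T}) : bool :=
  [forall x in S, forall y in S, ~~ e x y].

(* faces of Ind(G) with exactly k vertices (dimension k-1); k = 0 is the
   empty face *)
Definition faces (k : nat) : {set {set T}} :=
  [set S : {set T} | independent S && (#|S| == k)].

Definition vpos (S : {set T}) (v : T) : nat :=
  #|[set u in S | enum_rank u < enum_rank v]|.

Local Open Scope ring_scope.
Variable K : fieldType.

(* matrix of the (augmented) simplicial boundary map
   C_k(Ind G) -> C_{k-1}(Ind G), from faces with k+1 vertices to faces with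
   k vertices (row-vector convention: rows index the source basis) *)
Definition bd (k : nat) : 'M[K]_(#|faces k.+1|, #|faces k|) :=
  \matrix_(i, j)
    (let S := enum_val (A := faces k.+1) i in
     let R := enum_val (A := faces k) j in
     if R \subset S then \sum_(v in S :\: R) (-1) ^+ vpos S v else 0).

Definition rank_out (k : nat) : nat :=
  if k is k'.+1 then \rank (bd k') else 0%N.

(* dim_K  H~_{k-1}(Ind G; K) = dim ker d_{k-1} - dim im d_k *)
Definition red_betti (k : nat) : nat :=
  (#|faces k| - rank_out k - \rank (bd k))%N.

Definition total_red_betti : nat :=
  (\sum_(k < #|T|.+1) red_betti k)%N.

End Graphs.

(* Main.v *)
Require Import Defs.
From HB Require Import structures.
From mathcomp Require Import all_boot all_order all_algebra.
From mathcomp Require Import zify ring.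
From Stdlib Require Import FunctionalExtensionality.
Import Order.TTheory GRing.Theory Num.Theory.
Set Implicit Arguments. Unset Strict Implicit. Unset Printing Implicit Defensive.
Local Open Scope ring_scope.

Section LA.
Variable K : fieldType.

Lemma block_rank p1 p2 q1 q2 (X : 'M[K]_(p1,q1)) (Y : 'M[K]_(p2,q1)) (Z : 'M[K]_(p2,q2)) :
  (\rank X + \rank Z <= \rank (block_mx X 0 Y Z))%N.
Proof.
rewrite block_mxEv -addsmxE.
set U := row_mx X 0; set D := row_mx Y Z.
pose P : 'M[K]_(q1 + q2) := block_mx 0 0 0 1.
have UP : U *m P = 0 by rewrite /U /P mul_row_block !mulmx0 !mul0mx !addr0 row_mx0.
have DP : D *m P = row_mx 0 Z by rewrite /D /P mul_row_block !mulmx0 !mulmx1 !addr0 add0r.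
have := mxrank_sum_cap U D.
have := mxrank_mul_ker D P.
have : (\rank (U :&: D) <= \rank (D :&: kermx P))%N.
  apply: mxrankS; rewrite capmxC; apply: capmxS => //.
  by rewrite sub_kermx UP.
rewrite DP rank_row_0mx /U rank_row_mx0. lia.
Qed.
End LA.

Local Open Scope ring_scope.

Section Sub.
Variable K : fieldType.

Lemma sub_rank m n p q (M : 'M[K]_(m,n)) (f : 'I_p -> 'I_m) (g : 'I_q -> 'I_n) :
  (\rank (mxsub f g M) <= \rank M)%N.
Proof.
have -> : mxsub f g M = mxsub f id (1%:M : 'M[K]_m) *m (M *m mxsub id g (1%:M : 'M[K]_n)).
  by rewrite mulmx_colsub mulmx1 -mxsub_mul mul1mx.
apply: leq_trans (mxrankM_maxr _ _) _.
exact: mxrankM_maxl.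
Qed.

Lemma rank_blocks m n p1 p2 q1 q2 (M : 'M[K]_(m,n))
  (f1 : 'I_p1 -> 'I_m) (g1 : 'I_q1 -> 'I_n) (f2 : 'I_p2 -> 'I_m) (g2 : 'I_q2 -> 'I_n) :
  (forall i j, M (f1 i) (g2 j) = 0) ->
  (\rank (mxsub f1 g1 M) + \rank (mxsub f2 g2 M) <= \rank M)%N.
Proof.
move=> H0.
pose f (i : 'I_(p1 + p2)) := match split i with inl a => f1 a | inr b => f2 b end.
pose g (j : 'I_(q1 + q2)) := match split j with inl a => g1 a | inr b => g2 b end.
apply: leq_trans (sub_rank M f g).
have -> : mxsub f g M = block_mx (mxsub f1 g1 M) 0 (mxsub f2 g1 M) (mxsub f2 g2 M).
  apply/matrixP => i j; rewrite /block_mx !mxE /f /g.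
  case: (split i) => a; rewrite !mxE; case: (split j) => b; rewrite !mxE //.
exact: block_rank.
Qed.

Lemma rank_diag_nz p (N : 'M[K]_p) :
  (forall i j, (N i j != 0) = (i == j)) -> \rank N = p.
Proof.
move=> H; apply: mxrank_unit.
have -> : N = diag_mx (\row_i N i i).
  apply/matrixP => i j; rewrite !mxE.
  case: (eqVneq i j) => [->|ij]; first by rewrite mulr1n.
  by rewrite mulr0n; apply/eqP; rewrite -[_ == 0]negbK H (negPf ij).
rewrite unitmxE det_diag unitfE prodf_seq_neq0; apply/allP => i _ /=.
by rewrite mxE H.
Qed.
End Sub.


Section Cplx.
Variable T : finType.
Variable K : fieldType.

Definition facesF (F : pred {set T}) (k : nat) : {set {set T}} :=
  [set S : {set T} | F S && (#|S| == k)].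

Definition bdF F (k : nat) : 'M[K]_(#|facesF F k.+1|, #|facesF F k|) :=
  \matrix_(i, j)
    (let S := enum_val (A := facesF F k.+1) i in
     let R := enum_val (A := facesF F k) j in
     if R \subset S then (\sum_(v in S :\: R) (-1) ^+ vpos S v)%R else 0%R).

Definition rank_outF F (k : nat) : nat :=
  if k is k'.+1 then \rank (bdF F k') else 0%N.

Definition red_bettiF F (k : nat) : nat :=
  (#|facesF F k| - rank_outF F k - \rank (bdF F k))%N.

Definition bettiF F : nat := (\sum_(k < #|T|.+1) red_bettiF F k)%N.

Lemma bettiF_tot (e : rel T) : total_red_betti e K = bettiF (independent e).
Proof. by []. Qed.

Lemma bettiF_ext F1 F2 : F1 =1 F2 -> bettiF F1 = bettiF F2.
Proof.
move=> H.
have -> : F1 = F2 by apply: FunctionalExtensionality.functional_extensionality.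
by [].
Qed.

Definition reidx (A B : {set {set T}}) (h : {set T} -> {set T})
  (H : forall x, x \in A -> h x \in B) (i : 'I_#|A|) : 'I_#|B| :=
  enum_rank_in (H _ (enum_valP i)) (h (enum_val i)).

Lemma reidxE A B h H i : enum_val (@reidx A B h H i) = h (enum_val i).
Proof. by rewrite /reidx enum_rankK_in // H // enum_valP. Qed.

End Cplx.


Local Open Scope ring_scope.
Section Split.
Variable T : finType.
Variable K : fieldType.
Variable F : pred {set T}.
Variable v : T.

Definition Fdel : pred {set T} := fun S => F S && (v \notin S).
Definition Flink : pred {set T} := fun S => (v \notin S) && F (v |: S).

Lemma facesE (G : pred {set T}) k (S : {set T}) : (S \in facesF G k) = G S && (#|S| == k).
Proof. by rewrite inE. Qed.

Lemma cardU1_filter (x : T) (S : {set T}) (P : pred T) : x \notin S ->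
  #|[set w in x |: S | P w]| = (P x + #|[set w in S | P w]|)%N.
Proof.
move=> xS; case Px: (P x).
  have -> : [set w in x |: S | P w] = x |: [set w in S | P w].
    apply/setP => w; rewrite !inE; case: eqP => [->|] //=; by rewrite Px.
  by rewrite cardsU1 inE (negPf xS).
have -> : [set w in x |: S | P w] = [set w in S | P w].
  apply/setP => w; rewrite !inE; case: eqP => [->|] //=; by rewrite Px andbF.
by [].
Qed.

Lemma vposU1 (S : {set T}) (x u : T) : x \notin S ->
  vpos (x |: S) u = ((enum_rank x < enum_rank u)%N + vpos S u)%N.
Proof. exact: cardU1_filter. Qed.

Definition sg (S : {set T}) : K :=
  (-1) ^+ #|[set w in S | (enum_rank v < enum_rank w)%N]|.

Lemma sgU1 (S : {set T}) u : u \notin S ->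
  sg (u |: S) = (-1) ^+ (enum_rank v < enum_rank u)%N * sg S.
Proof. by move=> uS; rewrite /sg cardU1_filter // exprD. Qed.

Lemma sign_sq (n : nat) : ((-1) ^+ n * (-1) ^+ n = 1 :> K)%R.
Proof. by rewrite -exprMn mulrNN mulr1 expr1n. Qed.

Lemma del_sub k S : S \in facesF Fdel k -> S \in facesF F k.
Proof. by rewrite !facesE /Fdel => /andP [/andP [-> _] ->]. Qed.

Lemma link_sub k S : S \in facesF Flink k -> v |: S \in facesF F k.+1.
Proof.
rewrite !facesE /Flink => /andP [/andP [vS ->] /eqP <-].
by rewrite cardsU1 vS add1n eqxx.
Qed.

Lemma U1_subset (R S : {set T}) : v \notin R -> (v |: R \subset v |: S) = (R \subset S).
Proof.
move=> vR; apply/idP/idP => H; last by apply: setUS.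
apply/subsetP => x xR.
have : x \in v |: S by apply: (subsetP H); rewrite inE xR orbT.
rewrite !inE => /orP [/eqP xv|//]; by move: xR; rewrite xv (negPf vR).
Qed.

Lemma U1_diff (R S : {set T}) : v \notin S -> (v |: S) :\: (v |: R) = S :\: R.
Proof.
move=> vS; apply/setP => x; rewrite !inE; case: eqP => [->|] //=.
by rewrite (negPf vS) andbF.
Qed.

Lemma diff_single (R S : {set T}) k : R \subset S -> #|S| = k.+1 -> #|R| = k ->
  exists u, [/\ S :\: R = [set u], u \in S, u \notin R & S = u |: R].
Proof.
move=> RS cS cR.
have : #|S :\: R| == 1%N by rewrite cardsD (setIidPr RS) cS cR subSn // subnn.
case/cards1P => u Hu; exists u.
have uD : u \in S :\: R by rewrite Hu inE.
move: (uD); rewrite inE => /andP [uR uS]; split => //.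
apply/setP => x; rewrite !inE.
case: eqP => [->|xu] //=.
case xR: (x \in R); first by rewrite (subsetP RS).
apply/negP => xS.
have : x \in S :\: R by rewrite inE xR xS.
by rewrite Hu inE => /eqP.
Qed.

Lemma bd_del k : bdF K Fdel k =
  mxsub (reidx (@del_sub k.+1)) (reidx (@del_sub k)) (bdF K F k).
Proof. by apply/matrixP => i j; rewrite !mxE /= !reidxE. Qed.

Lemma bd_zero k i j :
  bdF K F k.+1 (reidx (@del_sub k.+2) i) (reidx (@link_sub k) j) = 0%R.
Proof.
rewrite !mxE /= !reidxE.
have := enum_valP i; rewrite facesE /Fdel => /andP [/andP [_ vS] _].
case: ifP => // /subsetP H; exfalso.
by move: (H v (setU11 _ _)); rewrite (negPf vS).
Qed.

Lemma bd_link k : bdF K Flink k =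
  \matrix_(i, j) (sg (enum_val i) *
     mxsub (reidx (@link_sub k.+1)) (reidx (@link_sub k)) (bdF K F k.+1) i j
     * sg (enum_val j))%R.
Proof.
apply/matrixP => i j; rewrite !mxE /= !reidxE.
set S := enum_val i; set R := enum_val j.
have := enum_valP i; rewrite facesE /Flink -/S => /andP [/andP [vS _] /eqP cS].
have := enum_valP j; rewrite facesE /Flink -/R => /andP [/andP [vR _] /eqP cR].
rewrite U1_subset // U1_diff //.
case: ifP => RS; last by rewrite mulr0 mul0r.
have [u [Hu uS uR SE]] := diff_single RS cS cR.
rewrite Hu !big_set1 vposU1 // exprD.
set a := (-1) ^+ (enum_rank v < enum_rank u)%N.
have -> : sg S = a * sg R by rewrite SE sgU1.
set b := (-1) ^+ vpos S u.
set c := sg R.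
have aa : a * a = 1 by apply: sign_sq.
have cc : c * c = 1 by apply: sign_sq.
transitivity (b * (a * a) * (c * c)); first by rewrite aa cc !mulr1.
ring.
Qed.


Lemma rank_scale p q (N : 'M[K]_(p, q)) (a : 'I_p -> K) (b : 'I_q -> K) :
  (\rank (\matrix_(i, j) (a i * N i j * b j)%R) <= \rank N)%N.
Proof.
have -> : \matrix_(i, j) (a i * N i j * b j) =
   diag_mx (\row_i a i) *m N *m diag_mx (\row_j b j).
  by apply/matrixP => i j; rewrite mul_mx_diag mul_diag_mx !mxE.
apply: leq_trans (mxrankM_maxl _ _) _; exact: mxrankM_maxr.
Qed.

Lemma rank_split k :
  (\rank (bdF K Fdel k) + rank_outF K Flink k <= \rank (bdF K F k))%N.
Proof.
case: k => [|k] /=.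
  by rewrite addn0 bd_del; apply: sub_rank.
rewrite bd_del.
apply: (leq_trans _ (rank_blocks (reidx (@del_sub k.+1)) (reidx (@link_sub k.+1)) (@bd_zero k))).
rewrite leq_add2l bd_link; exact: rank_scale.
Qed.

Lemma count_split k : #|facesF F k.+1| = (#|facesF Fdel k.+1| + #|facesF Flink k|)%N.
Proof.
rewrite -(cardsID [set S : {set T} | v \in S] (facesF F k.+1)) addnC.
congr (_ + _)%N.
  have -> : facesF F k.+1 :\: [set S : {set T} | v \in S] = facesF Fdel k.+1 => //.
  apply/setP => S; rewrite !inE /Fdel; by case: (F S); case: (v \in S).
have -> : facesF F k.+1 :&: [set S : {set T} | v \in S] =
    [set v |: S | S in facesF Flink k].
  apply/setP => S; rewrite !inE; apply/idP/idP.
    case/andP => /andP [FS /eqP cS] vS.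
    apply/imsetP; exists (S :\ v); last by rewrite setD1K.
    rewrite facesE /Flink setD1K // FS !inE eqxx /=.
    by apply/eqP; move: cS; rewrite (cardsD1 v S) vS; lia.
  case/imsetP => R; rewrite facesE /Flink => /andP [/andP [vR FR] /eqP cR] ->.
  by rewrite FR cardsU1 vR cR setU11 add1n eqxx.
apply: card_in_imset => R1 R2; rewrite !facesE /Flink.
move=> /andP [/andP [v1 _] _] /andP [/andP [v2 _] _] E.
by rewrite -(setU1K v1) -(setU1K v2) E.
Qed.

Lemma count0 : #|facesF F 0| = #|facesF Fdel 0|.
Proof.
have -> : facesF F 0 = facesF Fdel 0 => //.
apply/setP => S; rewrite !inE /Fdel.
case: (boolP (#|S| == 0)%N) => cS; last by rewrite !andbF.
move: cS; rewrite cards_eq0 => /eqP E; rewrite E in_set0 /=; by case: (F set0).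
Qed.

Lemma betti_split : (bettiF K F <= bettiF K Fdel + bettiF K Flink)%N.
Proof.
rewrite /bettiF big_ord_recl [X in (_ <= X + _)%N]big_ord_recl.
rewrite [X in (_ <= _ + X)%N]big_ord_recr /=.
have H0 : (red_bettiF K F 0 <= red_bettiF K Fdel 0)%N.
  rewrite /red_bettiF /= !subn0.
  have := rank_split 0; have := count0; rewrite /= addn0; lia.
have HS i : (red_bettiF K F i.+1 <= red_bettiF K Fdel i.+1 + red_bettiF K Flink i)%N.
  rewrite /red_bettiF; have := count_split i.
  have h1 := rank_split i.+1; have h2 := rank_split i.
  move: h1 h2; rewrite /=; lia.
have HS' : (\sum_(i < #|T|) red_bettiF K F (bump 0 i) <=
   \sum_(i < #|T|) (red_bettiF K Fdel (bump 0 i) + red_bettiF K Flink i))%N.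
  by apply: leq_sum => i _; rewrite (_ : bump 0 i = i.+1) //; apply: HS.
move: HS'; rewrite big_split /=.
lia.
Qed.

Hypothesis cone : forall S : {set T}, v \notin S -> F (v |: S) = F S.

Lemma cone_sub k S : S \in facesF Fdel k -> v |: S \in facesF F k.+1.
Proof.
rewrite !facesE /Fdel => /andP [/andP [FS vS] /eqP cS].
by rewrite cone // FS cardsU1 vS cS add1n eqxx.
Qed.

Lemma cone_rank k : (#|facesF Fdel k| <= \rank (bdF K F k))%N.
Proof.
rewrite -[X in (X <= _)%N](@rank_diag_nz K _
   (mxsub (reidx (@cone_sub k)) (reidx (@del_sub k)) (bdF K F k))); first exact: sub_rank.
move=> i j; rewrite !mxE /= !reidxE.
have := enum_valP i; rewrite facesE /Fdel => /andP [/andP [_ vS] /eqP cS].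
have := enum_valP j; rewrite facesE /Fdel => /andP [/andP [_ vR] /eqP cR].
case: (eqVneq i j) => [<-|ij].
  set S := enum_val i in vS cS *.
  rewrite subsetUr.
  have -> : (v |: S) :\: S = [set v].
    apply/setP => x; rewrite !inE; case: eqP => [->|] /=; first by rewrite vS.
    by rewrite andNb.
  by rewrite big_set1 signr_eq0.
case: ifP => RS; last by rewrite eqxx.
exfalso; move/negP: ij; apply; apply/eqP; apply: enum_val_inj.
apply/eqP; rewrite eq_sym eqEcard cS cR leqnn andbT.
apply/subsetP => x xR; have := subsetP RS x xR; rewrite !inE.
case: eqP => [xv|] //=; by move: xR; rewrite xv (negPf vR).
Qed.

Lemma link_del : Flink =1 Fdel.
Proof. move=> S; rewrite /Flink /Fdel; case: (boolP (v \in S)) => vS /=; first by rewrite andbF. by rewrite cone // andbT. Qed.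

Lemma betti_cone : bettiF K F = 0%N.
Proof.
rewrite /bettiF; apply: big1 => -[[|k] Hk] _; rewrite /red_bettiF /=.
  apply/eqP; rewrite subn0 subn_eq0 [X in (X <= _)%N]count0; exact: cone_rank.
apply/eqP; rewrite subn_eq0 leq_subLR [X in (X <= _)%N]count_split addnC.
apply: leq_add; last exact: cone_rank.
have -> : facesF Flink k = facesF Fdel k; last exact: cone_rank.
by apply/setP => S; rewrite !inE link_del.
Qed.

End Split.


Section Graph.
Variable T : finType.
Variable K : fieldType.
Variable e : rel T.
Hypothesis Hsym : symmetric e.
Hypothesis Hirr : irreflexive e.

Lemma indepP (S : {set T}) :
  reflect (forall x y, x \in S -> y \in S -> ~~ e x y) (independent e S).
Proof.
apply: (iffP forall_inP) => H.
  by move=> x y xS yS; have /forall_inP := H x xS; apply.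
by move=> x xS; apply/forall_inP => y yS; apply: H.
Qed.

Definition FA (A : {set T}) : pred {set T} := fun S => independent e S && (S \subset A).
Definition bA (A : {set T}) : nat := bettiF K (FA A).
Definition Nc (v : T) : {set T} := v |: [set u | e v u].

Lemma del_FA (A : {set T}) (v : T) : Fdel (FA A) v =1 FA (A :\ v).
Proof.
move=> S; rewrite /Fdel /FA -andbA; congr (_ && _).
apply/idP/idP.
  case/andP => SA vS; apply/subsetP => x xS; rewrite !inE (subsetP SA) // andbT.
  by apply: contraNneq vS => <-.
move=> SA; apply/andP; split; first by apply: subset_trans SA (subD1set _ _).
by apply/negP => /(subsetP SA); rewrite !inE eqxx.
Qed.

Lemma link_FA (A : {set T}) (v : T) : v \in A -> Flink (FA A) v =1 FA (A :\: Nc v).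
Proof.
move=> vA S; rewrite /Flink /FA /Nc.
apply/idP/idP.
  case/and3P => vS /indepP ind /subsetP sub.
  apply/andP; split.
    by apply/indepP => x y xS yS; apply: ind; rewrite inE ?xS ?yS orbT.
  apply/subsetP => x xS; rewrite !inE sub ?inE ?xS ?orbT // andbT.
  apply/negP => /orP [/eqP xv|evx]; first by move: vS; rewrite -xv xS.
  by move: (ind v x); rewrite !inE eqxx xS orbT evx => /(_ isT isT).
case/andP => /indepP ind /subsetP sub.
have vS : v \notin S by apply/negP => /sub; rewrite !inE eqxx.
rewrite vS /=; apply/andP; split.
  apply/indepP => x y; rewrite !inE => /orP [/eqP ->|xS] /orP [/eqP ->|yS].
  - by rewrite Hirr.
  - by have := sub y yS; rewrite !inE negb_or => /andP [/andP [_ ->]].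
  - by have := sub x xS; rewrite !inE negb_or Hsym => /andP [/andP [_ ->]].
  - exact: ind.
apply/subsetP => x; rewrite !inE => /orP [/eqP -> //|xS].
by have := sub x xS; rewrite !inE => /andP [].
Qed.

Lemma b_split (A : {set T}) (v : T) : v \in A -> (bA A <= bA (A :\ v) + bA (A :\: Nc v))%N.
Proof.
move=> vA; rewrite /bA.
rewrite -(bettiF_ext K (del_FA A v)) -(bettiF_ext K (link_FA vA)).
exact: betti_split.
Qed.

Lemma b_cone (A : {set T}) (v : T) : v \in A -> (forall u, u \in A -> ~~ e v u) -> bA A = 0%N.
Proof.
move=> vA Hn; rewrite /bA; apply: (@betti_cone _ _ _ v) => S vS.
rewrite /FA; apply/idP/idP.
  case/andP => /indepP ind /subsetP sub; apply/andP; split.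
    by apply/indepP => x y xS yS; apply: ind; rewrite inE ?xS ?yS orbT.
  by apply/subsetP => x xS; apply: sub; rewrite inE xS orbT.
case/andP => /indepP ind /subsetP sub; apply/andP; split.
  apply/indepP => x y; rewrite !inE => /orP [/eqP ->|xS] /orP [/eqP ->|yS].
  - by rewrite Hirr.
  - by apply: Hn; apply: sub.
  - by rewrite Hsym; apply: Hn; apply: sub.
  - exact: ind.
apply/subsetP => x; rewrite !inE => /orP [/eqP -> //|xS].
exact: sub.
Qed.

Lemma b_empty : (bA set0 <= 1)%N.
Proof.
rewrite /bA /bettiF big_ord_recl big1 ?addn0.
  rewrite /red_bettiF; apply: leq_trans (leq_subr _ _) _.
  apply: leq_trans (leq_subr _ _) _.
  rewrite -(cards1 (set0 : {set T})); apply: subset_leq_card.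
  apply/subsetP => S; rewrite !inE => /andP [_]; by rewrite cards_eq0.
move=> i _; apply/eqP; rewrite -leqn0.
rewrite /red_bettiF; apply: leq_trans (leq_subr _ _) _.
apply: leq_trans (leq_subr _ _) _.
rewrite leqn0 cards_eq0; apply/eqP/setP => S; rewrite !inE /FA.
apply/negP => /andP [/andP [_ S0] /eqP cS].
move: S0; rewrite subset0 => /eqP S0; move: cS; rewrite S0 cards0.
by [].
Qed.

End Graph.


Section Main.
Variable T : finType.
Variable K : fieldType.
Variable e : rel T.
Hypothesis Hsym : symmetric e.
Hypothesis Hirr : irreflexive e.
Hypothesis Htf : triangle_free e.
Hypothesis Hdeg : two_degenerate e.

Local Notation b := (bA K e).
Local Notation Nc := (Nc e).

Lemma size_rm (A B : {set T}) (s : seq T) : uniq s -> {subset s <= A :&: B} ->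
  (#|A :\: B| + size s <= #|A|)%N.
Proof.
move=> us ss.
have h1 : (#|s| <= #|A :&: B|)%N by apply: subset_leq_card; apply/subsetP.
have h2 : (#|A :&: B| <= #|A|)%N by apply: subset_leq_card; apply: subsetIl.
move/card_uniqP: us => us.
rewrite cardsD; lia.
Qed.

Lemma gt_aux (bb : bool) x : (1 < bb + x)%N -> (0 < x)%N.
Proof. case: bb => /=; lia. Qed.

Lemma NAP (A : {set T}) x u : (u \in [set u in A | e x u]) = (u \in A) && e x u.
Proof. by rewrite inE. Qed.

Lemma deg1 (A : {set T}) x y : x \in A -> [set u in A | e x u] = [set y] ->
  (b A <= b (A :\: Nc y))%N.
Proof.
move=> xA Hx.
have : y \in [set u in A | e x u] by rewrite Hx set11.
rewrite inE => /andP [yA exy].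
apply: leq_trans (b_split K Hsym Hirr yA) _.
rewrite (@b_cone _ K e Hsym Hirr (A :\ y) x) //.
  by rewrite !inE xA andbT; apply/eqP => xy; move: exy; rewrite xy Hirr.
move=> u; rewrite !inE => /andP [uy uA]; apply/negP => exu.
have : u \in [set u in A | e x u] by rewrite inE uA exu.
by rewrite Hx inE (negPf uy).
Qed.

Lemma leaf (A : {set T}) v a c : v \in A -> [set u in A | e v u] = [set a; c] -> a != c ->
  (#|[set u in A | e a u]| <= 1)%N ->
  (b A <= b (A :\: Nc v))%N /\ (#|A :\: Nc v| + 3 <= #|A|)%N.
Proof.
move=> vA Hv ac ca.
have : a \in [set u in A | e v u] by rewrite Hv !inE eqxx.
rewrite inE => /andP [aA eva].
have : c \in [set u in A | e v u] by rewrite Hv !inE eqxx orbT.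
rewrite inE => /andP [cA_ evc].
have Ha : [set u in A | e a u] = [set v].
  apply/eqP; rewrite eq_sym eqEcard cards1 ca andbT sub1set inE vA /=.
  by rewrite Hsym.
split; first exact: (deg1 (x := a)).
have -> : 3%N = size [:: v; a; c] by [].
apply: size_rm.
  rewrite /= !inE negb_or ac !andbT.
  apply/andP; split; apply/eqP => E.
    by move: eva; rewrite -E Hirr.
  by move: evc; rewrite -E Hirr.
move=> x; rewrite /Nc !inE => /or3P [] /eqP ->.
- by rewrite vA eqxx.
- by rewrite aA eva orbT.
- by rewrite cA_ evc orbT.
Qed.

Local Open Scope ring_scope.
Variable R : realDomainType.
Variable G : R.
Hypothesis G1 : 1 <= G.
Hypothesis G4 : G ^+ 4 = G + 1.

Lemma Gmono m n : (m <= n)%N -> G ^+ m <= G ^+ n.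
Proof. exact: ler_weXn2l. Qed.

Lemma arith (x y z w n : nat) : (x <= n.+1)%N -> x = y.+1 -> (z + 3 <= y)%N ->
  (w + 3 <= x)%N -> [/\ (z <= n)%N, (w <= n)%N & exists2 k, x = (k + 4)%N &
    (z <= k)%N /\ (w <= k.+1)%N].
Proof. move=> *; split; try lia. exists (x - 4)%N; lia. Qed.

Lemma main_bound n (A : {set T}) : (#|A| <= n)%N -> (b A)%:R <= G ^+ #|A|.
Proof.
have G0 : 0 <= G by apply: le_trans G1.
elim: n A => [|n IH] A cA.
  move: cA; rewrite leqn0 cards_eq0 => /eqP ->; rewrite cards0 expr0.
  by rewrite lern1 b_empty.
have IHB (B : {set T}) : (#|B| < #|A|)%N -> (b B)%:R <= G ^+ #|A|.
  move=> cB; apply: le_trans (IH B _) _; first lia.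
  by apply: Gmono; apply: ltnW.
have step (B : {set T}) : (b A <= b B)%N -> (#|B| < #|A|)%N -> (b A)%:R <= G ^+ #|A|.
  by move=> bAB cB; apply: le_trans (IHB B cB); rewrite ler_nat.
case: (eqVneq A set0) => [->|An0].
  by rewrite cards0 expr0 lern1 b_empty.
have [v vA dv] := Hdeg An0.
have : (#|[set u in A | e v u]| == 0 \/ #|[set u in A | e v u]| == 1 \/
        #|[set u in A | e v u]| == 2)%N by lia.
case=> [c0|[/cards1P [w Hw]|/cards2P [a [c [ac Hv]]]]].
- rewrite (@b_cone _ K e Hsym Hirr A v) // ?ler0n ?exprn_ge0 //.
  move=> u uA; apply/negP => evu.
  have : u \in [set u in A | e v u] by rewrite inE uA evu.
  by move: c0; rewrite cards_eq0 => /eqP ->; rewrite inE.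
- apply: (step _ (deg1 vA Hw)).
  have : w \in [set u in A | e v u] by rewrite Hw set11.
  rewrite inE => /andP [wA _].
  have H : (#|A :\: Nc w| + size [:: w] <= #|A|)%N.
    apply: size_rm => // x; rewrite inE => /eqP ->.
    by rewrite /Nc !inE wA eqxx.
  move: H => /=; lia.
have : a \in [set u in A | e v u] by rewrite Hv !inE eqxx.
rewrite inE => /andP [aA eva].
have : c \in [set u in A | e v u] by rewrite Hv !inE eqxx orbT.
rewrite inE => /andP [cA_ evc].
have nac : ~~ e a c.
  by apply/negP => eac; apply: (Htf (x := v) (y := a) (z := c)); rewrite eva eac evc.
have leafS (B : {set T}) : (b A <= b B)%N -> (#|B| + 3 <= #|A|)%N ->
    (b A)%:R <= G ^+ #|A|.
  by move=> h1 h2; apply: step h1 _; lia.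
case: (leqP #|[set u in A | e a u]| 1) => [la|ga].
  by have [h1 h2] := leaf vA Hv ac la; apply: leafS h1 h2.
case: (leqP #|[set u in A | e c u]| 1) => [lc|gc].
  have Hv' : [set u in A | e v u] = [set c; a] by rewrite Hv setUC.
  have ca : c != a by rewrite eq_sym.
  by have [h1 h2] := leaf vA Hv' ca lc; apply: leafS h1 h2.
have : exists p, p \in ([set u in A | e a u] :\ v).
  apply/card_gt0P; move: ga; rewrite (cardsD1 v [set u in A | e a u]); exact: gt_aux.
case=> p; rewrite !inE => /andP [pv /andP [pA eap]].
have : exists q, q \in ([set u in A | e c u] :\ v).
  apply/card_gt0P; move: gc; rewrite (cardsD1 v [set u in A | e c u]); exact: gt_aux.
case=> q; rewrite !inE => /andP [qv /andP [qA ecq]].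
have av : a != v by apply/eqP => E; move: eva; rewrite E Hirr.
have cv : c != v by apply/eqP => E; move: evc; rewrite E Hirr.
have qa : q != a.
  by apply/eqP => E; move: ecq; rewrite E Hsym (negPf nac).
have HA' : [set u in A :\ a | e v u] = [set c].
  apply/setP => u; rewrite !inE.
  have H : (u \in A) && e v u = (u == a) || (u == c) by move/setP/(_ u): Hv; rewrite !inE.
  apply/idP/idP.
    case/andP => /andP [ua uA] evu.
    move: H; rewrite uA evu /= => /esym /orP [/eqP E|//].
    by rewrite E eqxx in ua.
  by move/eqP => ->; rewrite eq_sym ac cA_ evc.
have vA' : v \in A :\ a by rewrite !inE vA eq_sym av.
have h1 := deg1 vA' HA'.
have h2 := b_split K Hsym Hirr aA.
have s1 : (#|(A :\ a) :\: Nc c| + size [:: c; v; q] <= #|A :\ a|)%N.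
  apply: size_rm.
    rewrite /= !inE negb_or cv !andbT; apply/andP; split.
      by apply/eqP => E; move: ecq; rewrite -E Hirr.
    by rewrite eq_sym.
  move=> x; rewrite /Nc !inE => /or3P [] /eqP ->.
  - by rewrite eqxx cA_ andbT eq_sym ac.
  - by rewrite vA eq_sym av Hsym evc !orbT.
  - by rewrite qA qa ecq !orbT.
have s2 : (#|A :\: Nc a| + size [:: a; v; p] <= #|A|)%N.
  apply: size_rm.
    rewrite /= !inE negb_or av !andbT; apply/andP; split.
      by apply/eqP => E; move: eap; rewrite -E Hirr.
    by rewrite eq_sym.
  move=> x; rewrite /Nc !inE => /or3P [] /eqP ->.
  - by rewrite eqxx aA.
  - by rewrite vA Hsym eva !orbT.
  - by rewrite pA eap !orbT.
have cA1 : #|A| = (#|A :\ a|).+1 by rewrite (cardsD1 a A) aA.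
move: s1 s2; rewrite /= => s1 s2.
set B1 := (A :\ a) :\: Nc c in h1 s1.
set B2 := A :\: Nc a in h2 s2.
have [n1 n2 [k Ek [m1 m2]]] := arith cA cA1 s1 s2.
have i1 : (b B1)%:R <= G ^+ #|B1| by apply: IH.
have i2 : (b B2)%:R <= G ^+ #|B2| by apply: IH.
have j1 : G ^+ #|B1| <= G ^+ k by apply: Gmono.
have j2 : G ^+ #|B2| <= G ^+ k.+1 by apply: Gmono.
have -> : G ^+ #|A| = G ^+ k.+1 + G ^+ k by rewrite Ek exprD G4 mulrDr mulr1 exprSr.
apply: le_trans (_ : (b B1 + b B2)%:R <= _).
  by rewrite ler_nat; apply: leq_trans h2 _; rewrite leq_add2r.
rewrite natrD addrC; apply: lerD.
  exact: le_trans i2 j2.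
exact: le_trans i1 j1.
Qed.
End Main.


Lemma final_bound (T : finType) (K : fieldType) (e : rel T) (Hsym : symmetric e)
  (Hirr : irreflexive e) (Htf : triangle_free e) (Hdeg : two_degenerate e)
  (R : realDomainType) (G : R) (G1 : 1 <= G) (G4 : G ^+ 4 = G + 1) :
  (total_red_betti e K)%:R <= G ^+ #|T|.
Proof.
have HB := @main_bound T K e Hsym Hirr Htf Hdeg R G G1 G4 #|T| setT (max_card _).
have Eb : total_red_betti e K = bA K e setT.
  rewrite bettiF_tot /bA; apply: bettiF_ext => S; by rewrite /FA subsetT andbT.
by rewrite Eb; move: HB; rewrite cardsT.
Qed.

From mathcomp Require Import all_classical all_reals all_analysis.
Import Order.TTheory GRing.Theory Num.Theory.

Local Open Scope ring_scope.
Theorem proposition6p4 (K : fieldType) (T : finType) (e : rel T)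
  (Hsimple : simple_graph e) (Hn : (1 <= #|T|)%N)
  (Htf : triangle_free e) (Hdeg : two_degenerate e)
  (R : realType) (Gamma2 : R)
  (HG1 : (1 <= Gamma2)%R) (HG2 : (Gamma2 <= 2)%R)
  (HGroot : (Gamma2 ^+ 4 - Gamma2 - 1 = 0)%R) :
  ((total_red_betti e K)%:R `^ (#|T|%:R^-1) <= Gamma2)%R.
Proof.
case: Hsimple => Hsym Hirr.
have G4 : Gamma2 ^+ 4 = Gamma2 + 1.
  by move/eqP: HGroot; rewrite subr_eq0 subr_eq => /eqP ->; rewrite addrC.
have HB := @final_bound T K e Hsym Hirr Htf Hdeg R Gamma2 HG1 G4.
have G0 : 0 <= Gamma2 by apply: le_trans HG1.
have n0 : (#|T|%:R : R) != 0 by rewrite pnatr_eq0 -lt0n.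
apply: le_trans (_ : (Gamma2 ^+ #|T|) `^ (#|T|%:R^-1) <= _).
  apply: ge0_ler_powR.
  - by rewrite Num.Theory.invr_ge0 Num.Theory.ler0n.
  - by rewrite nnegrE Num.Theory.ler0n.
  - by rewrite nnegrE exprn_ge0.
  - exact: HB.
rewrite -powR_mulrn // -powRrM mulfV // powRr1 //.
Qed.
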